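(* Let $M$ be a path-connected pre-$\Delta$-monoid with identity $e$. If $\alpha_n\in\Omega(M,e)$ is a null-sequence and $\phi:\mathbb{N}\to\mathbb{N}$ is a bijection, then $\prod_{n=1}^\infty\alpha_n\simeq\prod_{n=1}^\infty\alpha_{\phi(n)}$ by a path-homotopy with image in $\mathrm{Im}\left(\prod_{n=1}^\infty\alpha_n\right)\ast\mathrm{Im}\left(\prod_{n=1}^\infty\alpha_n\right)$.
   Context: A pre-$\Delta$-monoid is a space $M$ with an associative operation $\ast$ with identity $e$ such that for any continuous paths $\alpha,\beta:[0,1]\to M$, the pointwise product $t\mapsto\alpha(t)\ast\beta(t)$ is continuous. For $A,B\subseteq M$, $A\ast B=\{a\ast b\mid a\in A,b\in B\}$. A sequence of loops $\alpha_n\in\Omega(M,e)$ is a null-sequence if every neighborhood of $e$ contains $\mathrm{Im}(\alpha_n)$ for all but finitely many $n$; its infinite concatenation $\prod_{n=1}^\infty\alpha_n$ is the loop equal to (a linear reparametrization of) $\alpha_n$ on $[\frac{n-1}{n},\frac{n}{n+1}]$ and sending $1$ to $e$. *)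

(* Defs.v *)
From Stdlib Require Import Reals Lra Lia ZArith.
Open Scope R_scope.

Record Topology (X : Type) := {
  is_open : (X -> Prop) -> Prop;
  open_full : is_open (fun _ => True);
  open_inter : forall U V, is_open U -> is_open V -> is_open (fun x => U x /\ V x);
  open_union : forall F : (X -> Prop) -> Prop,
      (forall U, F U -> is_open U) -> is_open (fun x => exists U, F U /\ U x)
}.
Arguments is_open {X} _ _.

Definition unit_I (t : R) : Prop := 0 <= t <= 1.

Definition nbhd {X} (T : Topology X) (x : X) (N : X -> Prop) : Prop :=
  exists U, is_open T U /\ U x /\ (forall y, U y -> N y).

(* A path is a function R -> X of which only the restriction to [0,1] matters;
   it is continuous if this restriction is continuous ([0,1] with the
   Euclidean subspace topology). *)
Definition path_continuous {X} (T : Topology X) (a : R -> X) : Prop :=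
  forall U, is_open T U -> forall t, unit_I t -> U (a t) ->
    exists d, 0 < d /\ forall s, unit_I s -> Rabs (s - t) < d -> U (a s).

Definition square_continuous {X} (T : Topology X) (H : R -> R -> X) : Prop :=
  forall U, is_open T U -> forall s t, unit_I s -> unit_I t -> U (H s t) ->
    exists d, 0 < d /\ forall s' t', unit_I s' -> unit_I t' ->
      Rabs (s' - s) < d -> Rabs (t' - t) < d -> U (H s' t').

Definition path_connected {X} (T : Topology X) : Prop :=
  forall x y, exists a, path_continuous T a /\ a 0 = x /\ a 1 = y.

Definition pre_Delta_monoid {M} (T : Topology M) (op : M -> M -> M) (e : M) : Prop :=
  (forall x y z, op x (op y z) = op (op x y) z) /\
  (forall x, op e x = x) /\ (forall x, op x e = x) /\
  (forall a b, path_continuous T a -> path_continuous T b ->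
     path_continuous T (fun t => op (a t) (b t))).

Definition is_loop {M} (T : Topology M) (e : M) (a : R -> M) : Prop :=
  path_continuous T a /\ a 0 = e /\ a 1 = e.

Definition path_image {X} (a : R -> X) : X -> Prop :=
  fun x => exists t, unit_I t /\ a t = x.

Definition set_prod {M} (op : M -> M -> M) (A B : M -> Prop) : M -> Prop :=
  fun x => exists a b, A a /\ B b /\ x = op a b.

(* null-sequence of loops (indexed from 0) *)
Definition null_sequence {M} (T : Topology M) (e : M) (a : nat -> R -> M) : Prop :=
  (forall n, is_loop T e (a n)) /\
  (forall N, nbhd T e N -> exists n0, forall n, (n0 <= n)%nat ->
     forall t, unit_I t -> N (a n t)).

(* For 0 <= t < 1, the unique k with k/(k+1) <= t < (k+1)/(k+2),
   namely floor(1/(1-t)) - 1. *)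
Definition concat_index (t : R) : nat :=
  (Z.to_nat (Int_part (/ (1 - t))) - 1)%nat.

(* Infinite concatenation: the 0-indexed a k (the paper's alpha_{k+1}) is
   linearly reparametrized onto [k/(k+1), (k+1)/(k+2)]; 1 is sent to e. *)
Definition inf_concat {M} (e : M) (a : nat -> R -> M) (t : R) : M :=
  if Rlt_dec t 1 then
    let k := concat_index t in
    a k ((t - INR k / INR (k + 1)) * (INR (k + 1) * INR (k + 2)))
  else e.

Definition bijective_nat (phi : nat -> nat) : Prop :=
  (forall m n, phi m = phi n -> m = n) /\ (forall m, exists n, phi n = m).

(* Main.v *)
Require Import Defs.
From Stdlib Require Import Reals Lra Lia ZArith Classical ClassicalEpsilon.
Open Scope R_scope.


Definition st (k : nat) : R := INR k / INR (k + 1).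
Definition Kc (k : nat) : R := INR (k + 1) * INR (k + 2).
Definition idx (t : R) : nat := concat_index t.
Definition loc (t : R) : R := (t - st (idx t)) * Kc (idx t).

Lemma inf_eq {M} (e : M) b t : inf_concat e b t = if Rlt_dec t 1 then b (idx t) (loc t) else e.
Proof. reflexivity. Qed.

Lemma INR_pos1 k : 0 < INR k + 1.
Proof. pose proof (pos_INR k); lra. Qed.

Lemma st_eq k : st k = 1 - / (INR k + 1).
Proof. unfold st. rewrite plus_INR. simpl (INR 1). pose proof (INR_pos1 k). field. lra. Qed.

Lemma Kc_eq k : Kc k = (INR k + 1) * (INR k + 2).
Proof. unfold Kc. rewrite !plus_INR. simpl (INR 1). simpl (INR 2). ring. Qed.

Lemma Kc_pos k : 0 < Kc k.
Proof. rewrite Kc_eq. pose proof (pos_INR k). nra. Qed.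

Lemma Kc_ge1 k : 1 <= Kc k.
Proof. rewrite Kc_eq. pose proof (pos_INR k). nra. Qed.

Lemma st_S k : st (S k) = st k + / Kc k.
Proof. rewrite !st_eq, Kc_eq, S_INR. pose proof (pos_INR k). field. lra. Qed.

Lemma st_S' k : (st (S k) - st k) * Kc k = 1.
Proof. rewrite st_S. pose proof (Kc_pos k). field. lra. Qed.

Lemma st_lt1 k : st k < 1.
Proof. rewrite st_eq. pose proof (INR_pos1 k). pose proof (Rinv_0_lt_compat _ H). lra. Qed.

Lemma st_ge0 k : 0 <= st k.
Proof. rewrite st_eq. pose proof (INR_pos1 k).
  assert (/ (INR k + 1) <= 1). { rewrite <- Rinv_1. apply Rinv_le_contravar; try lra. pose proof (pos_INR k); lra. }
  lra. Qed.

Lemma st_0 : st 0 = 0.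
Proof. unfold st. simpl. field. Qed.

Lemma st_le m n : (m <= n)%nat -> st m <= st n.
Proof. intros H. rewrite !st_eq. apply le_INR in H.
  assert (/ (INR n + 1) <= / (INR m + 1)). { apply Rinv_le_contravar. apply INR_pos1. lra. } lra. Qed.

Lemma st_lt m n : (m < n)%nat -> st m < st n.
Proof. intros H. rewrite !st_eq. apply lt_INR in H.
  assert (/ (INR n + 1) < / (INR m + 1)). { apply Rinv_lt_contravar. pose proof (INR_pos1 m); pose proof (INR_pos1 n). nra. lra. } lra. Qed.

Lemma one_minus_st k : 1 - st k = / (INR k + 1).
Proof. rewrite st_eq; ring. Qed.

Lemma idx_spec t : 0 <= t < 1 -> st (idx t) <= t < st (S (idx t)).
Proof.
  intros [H0 H1]. unfold idx, concat_index.
  set (r := / (1 - t)).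
  assert (Hr : 1 <= r). { unfold r. rewrite <- Rinv_1. apply Rinv_le_contravar; lra. }
  assert (Ht : t = 1 - / r). { unfold r. rewrite Rinv_inv. ring. }
  destruct (base_Int_part r) as [B1 B2].
  set (z := Int_part r) in *.
  assert (Hz : (1 <= z)%Z). { assert (0 < IZR z) by lra. apply lt_IZR in H. lia. }
  set (k := (Z.to_nat z - 1)%nat).
  assert (Hk : INR k + 1 = IZR z).
  { unfold k. rewrite minus_INR. rewrite INR_IZR_INZ, Z2Nat.id by lia. simpl. ring.
    apply (Nat2Z.inj_le 1). rewrite Z2Nat.id by lia. simpl. lia. }
  rewrite !st_eq, S_INR, Hk. rewrite Ht.
  assert (0 < IZR z) by lra.
  split.
  - assert (/ r <= / IZR z) by (apply Rinv_le_contravar; lra). lra.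
  - assert (/ (IZR z + 1) < / r) by (apply Rinv_lt_contravar; nra). lra.
Qed.

Lemma idx_unique k t : st k <= t < st (S k) -> idx t = k.
Proof.
  intros [H1 H2]. assert (0 <= t < 1) by (pose proof (st_ge0 k); pose proof (st_lt1 (S k)); lra).
  destruct (idx_spec t H) as [A B].
  destruct (Nat.lt_trichotomy (idx t) k) as [C|[C|C]]; auto.
  - pose proof (st_le (S (idx t)) k C). lra.
  - pose proof (st_le (S k) (idx t) C). lra.
Qed.

Lemma in_slot k t : st k <= t < st (S k) ->
  idx t = k /\ loc t = (t - st k) * Kc k /\ 0 <= loc t < 1.
Proof.
  intros H. pose proof (idx_unique k t H) as E.
  unfold loc. rewrite E. split; auto. split; auto.
  pose proof (st_S' k). pose proof (Kc_pos k). split; nra.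
Qed.

Lemma loc_range t : 0 <= t < 1 -> 0 <= loc t < 1.
Proof. intros H. destruct (idx_spec t H). apply (in_slot (idx t)); auto. Qed.

Lemma idx_ge K t : st K <= t -> t < 1 -> (K <= idx t)%nat.
Proof. intros H1 H2. assert (0 <= t < 1) by (pose proof (st_ge0 K); lra).
  destruct (idx_spec t H). destruct (le_lt_dec K (idx t)); auto.
  pose proof (st_le (S (idx t)) K l). lra. Qed.

Lemma idx_lt K t : 0 <= t -> t < st K -> (idx t < K)%nat.
Proof. intros H1 H2. assert (0 <= t < 1) by (pose proof (st_lt1 K); lra).
  destruct (idx_spec t H). destruct (le_lt_dec K (idx t)); auto.
  pose proof (st_le K (idx t) l). lra. Qed.

Lemma exists_st_close d : 0 < d -> exists K, 1 - d < st K.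
Proof.
  intros Hd. destruct (archimed (/ d)) as [A _].
  exists (Z.to_nat (up (/ d))). rewrite st_eq.
  assert (0 < / d) by (apply Rinv_0_lt_compat; lra).
  assert (HI : / d < INR (Z.to_nat (up (/d))) + 1).
  { rewrite INR_IZR_INZ, Z2Nat.id. lra. apply le_IZR. lra. }
  assert (/ (INR (Z.to_nat (up (/ d))) + 1) < d).
  { rewrite <- (Rinv_inv d) at 2. apply Rinv_lt_contravar. nra. auto. }
  lra.
Qed.


Definition lip2 (f : R -> R -> R) (L : R) : Prop :=
  forall s t s' t', unit_I s -> unit_I t -> unit_I s' -> unit_I t' ->
    Rabs (f s' t' - f s t) <= L * (Rabs (s' - s) + Rabs (t' - t)).

Definition maps_I2 (f : R -> R -> R) : Prop :=
  forall s t, unit_I s -> unit_I t -> unit_I (f s t).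

Lemma sq_comp_lip {M} (T : Topology M) X f g L :
  square_continuous T X -> 0 < L -> maps_I2 f -> maps_I2 g -> lip2 f L -> lip2 g L ->
  square_continuous T (fun s t => X (f s t) (g s t)).
Proof.
  intros HX HL Mf Mg Lf Lg U HU s t Hs Ht HUx.
  destruct (HX U HU (f s t) (g s t) (Mf s t Hs Ht) (Mg s t Hs Ht) HUx) as [d [Hd Hd']].
  exists (d / (2 * L)). split. apply Rdiv_lt_0_compat; lra.
  intros s' t' Hs' Ht' A B. apply Hd'; auto.
  - eapply Rle_lt_trans. apply Lf; auto.
    assert (L * (Rabs (s' - s) + Rabs (t' - t)) < L * (d / (2*L) + d / (2*L))) by (apply Rmult_lt_compat_l; lra).
    replace (L * (d / (2 * L) + d / (2 * L))) with d in H by (field; lra). lra.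
  - eapply Rle_lt_trans. apply Lg; auto.
    assert (L * (Rabs (s' - s) + Rabs (t' - t)) < L * (d / (2*L) + d / (2*L))) by (apply Rmult_lt_compat_l; lra).
    replace (L * (d / (2 * L) + d / (2 * L))) with d in H by (field; lra). lra.
Qed.

Lemma sq_path_lip {M} (T : Topology M) p f L :
  path_continuous T p -> 0 < L -> maps_I2 f -> lip2 f L ->
  square_continuous T (fun s t => p (f s t)).
Proof.
  intros HX HL Mf Lf U HU s t Hs Ht HUx.
  destruct (HX U HU (f s t) (Mf s t Hs Ht) HUx) as [d [Hd Hd']].
  exists (d / (2 * L)). split. apply Rdiv_lt_0_compat; lra.
  intros s' t' Hs' Ht' A B. apply Hd'; auto.
  eapply Rle_lt_trans. apply Lf; auto.
  assert (L * (Rabs (s' - s) + Rabs (t' - t)) < L * (d / (2*L) + d / (2*L))) by (apply Rmult_lt_compat_l; lra).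
  replace (L * (d / (2 * L) + d / (2 * L))) with d in H by (field; lra). lra.
Qed.

Lemma sq_of_path2 {M} (T : Topology M) p : path_continuous T p -> square_continuous T (fun s t => p t).
Proof.
  intros Hp. apply (sq_path_lip T p (fun s t => t) 1); auto; try lra.
  intros s t _ Ht; auto. intros s t s' t' _ _ _ _. pose proof (Rabs_pos (s'-s)). lra.
Qed.

Lemma sq_of_path1 {M} (T : Topology M) p : path_continuous T p -> square_continuous T (fun s t => p s).
Proof.
  intros Hp. apply (sq_path_lip T p (fun s t => s) 1); auto; try lra.
  intros s t Hs _; auto. intros s t s' t' _ _ _ _. pose proof (Rabs_pos (t'-t)). lra.
Qed.


Lemma min2 a b : 0 < a -> 0 < b -> exists x, 0 < x /\ x <= a /\ x <= b.
Proof. intros. exists (Rmin a b). split. apply Rmin_pos; auto. split. apply Rmin_l. apply Rmin_r. Qed.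

Lemma min4 a b c d : 0 < a -> 0 < b -> 0 < c -> 0 < d ->
  exists x, 0 < x /\ x <= a /\ x <= b /\ x <= c /\ x <= d.
Proof. intros. destruct (min2 a b) as [x [? [? ?]]]; auto. destruct (min2 c d) as [y [? [? ?]]]; auto.
  destruct (min2 x y) as [z [? [? ?]]]; auto. exists z; repeat split; lra. Qed.

Lemma min6 a b c d e f : 0 < a -> 0 < b -> 0 < c -> 0 < d -> 0 < e -> 0 < f ->
  exists x, 0 < x /\ x <= a /\ x <= b /\ x <= c /\ x <= d /\ x <= e /\ x <= f.
Proof. intros. destruct (min4 a b c d) as [x [? [? [? [? ?]]]]]; auto. destruct (min2 e f) as [y [? [? ?]]]; auto.
  destruct (min2 x y) as [z [? [? ?]]]; auto. exists z; repeat split; lra. Qed.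

Lemma glue_cont {M} (T : Topology M) (S : nat -> R -> R -> M) :
  (forall m, square_continuous T (S m)) ->
  (forall m t, unit_I t -> S m 1 t = S (Datatypes.S m) 0 t) ->
  forall U, is_open T U -> forall s t, 0 <= s < 1 -> unit_I t ->
  U (S (idx s) (loc s) t) ->
  exists d, 0 < d /\ forall s' t', unit_I s' -> unit_I t' -> Rabs (s' - s) < d -> Rabs (t' - t) < d ->
     s' < 1 /\ U (S (idx s') (loc s') t').
Proof.
  intros HS Hm U HU s t Hs Ht HUs.
  set (m := idx s) in *.
  destruct (idx_spec s Hs) as [L1 L2]. fold m in L1, L2.
  pose proof (Kc_pos m) as Kp. pose proof (Kc_ge1 m) as Kg.
  assert (Hloc : loc s = (s - st m) * Kc m) by reflexivity.
  pose proof (loc_range s Hs) as Hlr.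
  destruct (HS m U HU (loc s) t ltac:(unfold unit_I; lra) Ht HUs) as [d0 [Hd0 Hd0']].
  assert (Right : forall s' t', unit_I s' -> unit_I t' -> st m <= s' -> s' < st (Datatypes.S m) ->
            Rabs (s' - s) < d0 / Kc m -> Rabs (t' - t) < d0 -> U (S (idx s') (loc s') t')).
  { intros s' t' Hs' Ht' A B C D. destruct (in_slot m s' (conj A B)) as [E1 [E2 E3]].
    rewrite E1. apply Hd0'; auto. unfold unit_I; lra.
    rewrite E2, Hloc. replace ((s' - st m) * Kc m - (s - st m) * Kc m) with ((s' - s) * Kc m) by ring.
    rewrite Rabs_mult, (Rabs_right (Kc m)) by lra.
    apply (Rmult_lt_compat_r (Kc m)) in C; auto. replace (d0 / Kc m * Kc m) with d0 in C by (field; lra). lra. }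
  assert (d0K : 0 < d0 / Kc m) by (apply Rdiv_lt_0_compat; lra).
  pose proof (st_lt1 (Datatypes.S m)).
  destruct (Rlt_or_le (st m) s) as [Hint | Hbd].
  - destruct (min4 (d0 / Kc m) d0 (s - st m) (st (Datatypes.S m) - s)) as [dd [D0 [D1 [D2 [D3 D4]]]]]; try lra.
    exists dd. split; auto.
    intros s' t' Hs' Ht' A B. pose proof (Rabs_def2 _ _ A).
    split. lra. apply Right; auto; try lra.
  - assert (Hs_eq : s = st m) by lra.
    destruct m as [|m'] eqn:Em.
    + destruct (min4 (d0 / Kc 0) d0 1 (st 1 - s)) as [dd [D0 [D1 [D2 [D3 D4]]]]]; try lra.
      exists dd. split; auto.
      intros s' t' Hs' Ht' A B. pose proof (Rabs_def2 _ _ A). pose proof Hs' as [Hs1 Hs2].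
      rewrite st_0 in *.
      split. lra. apply Right; auto; try lra.
    + assert (Hprev : S m' 1 t = S (Datatypes.S m') 0 t) by (apply Hm; auto).
      assert (Hl0 : loc s = 0) by (rewrite Hloc, Hs_eq; ring).
      rewrite Hl0 in HUs. rewrite <- Hprev in HUs.
      destruct (HS m' U HU 1 t ltac:(unfold unit_I; lra) Ht HUs) as [d1 [Hd1 Hd1']].
      pose proof (Kc_pos m'). pose proof (st_S' m').
      assert (st m' < st (Datatypes.S m')) by (apply st_lt; lia).
      destruct (min6 (d0 / Kc (Datatypes.S m')) d0 (d1 / Kc m') d1 (s - st m') (st (Datatypes.S (Datatypes.S m')) - s))
        as [dd [D0 [D1 [D2 [D3 [D4 [D5 D6]]]]]]]; try lra.
      apply Rdiv_lt_0_compat; lra.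
      exists dd. split; auto.
      intros s' t' Hs' Ht' A B. pose proof (Rabs_def2 _ _ A).
      split. lra.
      destruct (Rle_or_lt s s') as [C|C].
      * apply Right; auto; lra.
      * destruct (in_slot m' s' ltac:(lra)) as [E1 [E2 E3]].
        rewrite E1. apply Hd1'; auto. unfold unit_I; lra.
        rewrite E2. rewrite Hs_eq in C.
        assert (Hx : (s' - st m') * Kc m' - 1 = - ((st (Datatypes.S m') - s') * Kc m')).
        { rewrite <- H1 at 1. ring. }
        rewrite Hx, Rabs_Ropp, Rabs_mult, Rabs_right, (Rabs_right (Kc m')) by lra.
        rewrite Hs_eq in A. apply Rabs_def2 in A.
        assert ((st (Datatypes.S m') - s') < d1 / Kc m') by lra.
        apply (Rmult_lt_compat_r (Kc m')) in H4; auto. replace (d1 / Kc m' * Kc m') with d1 in H4 by (field; lra). lra.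
        lra.
Qed.


Lemma nbhd_open {M} (T : Topology M) U x : is_open T U -> U x -> nbhd T x U.
Proof. intros. exists U. auto. Qed.

Lemma inf_concat_cont {M} (T : Topology M) (e : M) b :
  null_sequence T e b -> path_continuous T (inf_concat e b).
Proof.
  intros [Hl Hn] U HU t Ht HUt. rewrite inf_eq in HUt.
  destruct (Rlt_dec t 1) as [H1|H1].
  - destruct (glue_cont T (fun m s _ => b m s)
       (fun m => sq_of_path1 T (b m) (proj1 (Hl m)))
       (fun m t _ => eq_trans (proj2 (proj2 (Hl m))) (eq_sym (proj1 (proj2 (Hl (S m))))))
       U HU t 0 ltac:(unfold unit_I in *; lra) ltac:(unfold unit_I; lra) HUt) as [d [Hd Hd']].
    exists d. split; auto. intros s Hs Hst.
    destruct (Hd' s 0 Hs ltac:(unfold unit_I; lra) Hst ltac:(rewrite Rminus_0_r, Rabs_R0; lra)) as [A B].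
    rewrite inf_eq. destruct (Rlt_dec s 1); [auto | lra].
  - destruct (Hn U (nbhd_open T U e HU HUt)) as [n0 Hn0].
    exists (1 - st n0). split. pose proof (st_lt1 n0); lra.
    intros s Hs Hst. assert (t = 1) by (unfold unit_I in *; lra). subst t.
    apply Rabs_def2 in Hst.
    rewrite inf_eq. destruct (Rlt_dec s 1) as [Hs1|Hs1]; auto.
    apply Hn0. apply idx_ge; lra. pose proof (loc_range s). unfold unit_I in *. lra.
Qed.

Lemma null_reindex {M} (T : Topology M) (e : M) a (psi : nat -> nat) :
  null_sequence T e a -> (forall n m, psi n = psi m -> n = m) -> (forall i, exists n, psi n = i) ->
  null_sequence T e (fun n => a (psi n)).
Proof.
  intros [Hl Hn] Hinj Hsur. split. intros; apply Hl.
  intros N HN. destruct (Hn N HN) as [n0 Hn0].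
  assert (B : forall K, exists B, forall n, (psi n < K)%nat -> (n < B)%nat).
  { induction K as [|K [B IH]].
    - exists 0%nat. intros; lia.
    - destruct (Hsur K) as [nK HK]. exists (Nat.max B (S nK)). intros n Hn'.
      destruct (Nat.eq_dec (psi n) K) as [E|E].
      + rewrite <- HK in E. apply Hinj in E. lia.
      + specialize (IH n ltac:(lia)). lia. }
  destruct (B n0) as [B0 HB0]. exists B0. intros n Hn' t Ht. apply Hn0; auto.
  destruct (le_lt_dec n0 (psi n)); auto. apply HB0 in l. lia.
Qed.

Lemma null_mod {M} (T : Topology M) (e : M) b c :
  null_sequence T e b -> (forall n, is_loop T e (c n)) ->
  (forall n t, unit_I t -> c n t = e \/ c n t = b n t) -> null_sequence T e c.
Proof.
  intros [Hl Hn] Hc Hcb. split; auto. intros N HN. destruct (Hn N HN) as [n0 Hn0].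
  exists n0. intros n Hn' t Ht. destruct (Hcb n t Ht) as [E|E]; rewrite E.
  - destruct HN as [U [_ [HU HUN]]]. auto.
  - apply Hn0; auto.
Qed.


Definition lin (x : nat -> R) (s : R) (tau : R) : R :=
  if Rlt_dec tau 1 then (1 - loc tau) * x (idx tau) + loc tau * x (S (idx tau)) else s.

Lemma lin_st x s n : lin x s (st n) = x n.
Proof. unfold lin. destruct (Rlt_dec (st n) 1) as [H|H]; [|pose proof (st_lt1 n); lra].
  pose proof (st_S' n). pose proof (st_lt n (S n) ltac:(lia)).
  destruct (in_slot n (st n) ltac:(lra)) as [E1 [E2 _]]. rewrite E1, E2. ring. Qed.

Lemma path_through {M} (T : Topology M) X x y s t :
  square_continuous T X -> unit_I s -> unit_I t ->
  (forall n, unit_I (x n)) -> (forall n, unit_I (y n)) ->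
  (forall n, Rabs (x n - s) < 1 - st n) -> (forall n, Rabs (y n - t) < 1 - st n) ->
  path_continuous T (fun tau => X (lin x s tau) (lin y t tau)).
Proof.
  intros HX Hs Ht Hx Hy Cx Cy.
  set (Sg := fun n sg (_ : R) => X ((1 - sg) * x n + sg * x (S n)) ((1 - sg) * y n + sg * y (S n))).
  assert (HS : forall n, square_continuous T (Sg n)).
  { intro n. unfold Sg. apply (sq_comp_lip T X _ _ 1); auto; try lra.
    - intros sg _ Hsg _. pose proof (Hx n); pose proof (Hx (S n)); unfold unit_I in *; split; nra.
    - intros sg _ Hsg _. pose proof (Hy n); pose proof (Hy (S n)); unfold unit_I in *; split; nra.
    - intros a b a' b' _ _ _ _. replace ((1 - a') * x n + a' * x (S n) - ((1 - a) * x n + a * x (S n)))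
        with ((a' - a) * (x (S n) - x n)) by ring. rewrite Rabs_mult.
      pose proof (Hx n); pose proof (Hx (S n)); unfold unit_I in *.
      assert (Rabs (x (S n) - x n) <= 1) by (apply Rabs_le; lra).
      pose proof (Rabs_pos (a'-a)); pose proof (Rabs_pos (b'-b)). nra.
    - intros a b a' b' _ _ _ _. replace ((1 - a') * y n + a' * y (S n) - ((1 - a) * y n + a * y (S n)))
        with ((a' - a) * (y (S n) - y n)) by ring. rewrite Rabs_mult.
      pose proof (Hy n); pose proof (Hy (S n)); unfold unit_I in *.
      assert (Rabs (y (S n) - y n) <= 1) by (apply Rabs_le; lra).
      pose proof (Rabs_pos (a'-a)); pose proof (Rabs_pos (b'-b)). nra. }
  assert (HM : forall n t0, unit_I t0 -> Sg n 1 t0 = Sg (S n) 0 t0).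
  { intros. unfold Sg. f_equal; ring. }
  assert (Eq : forall tau, tau < 1 -> X (lin x s tau) (lin y t tau) = Sg (idx tau) (loc tau) 0).
  { intros tau H. unfold lin, Sg. destruct (Rlt_dec tau 1); [reflexivity|lra]. }
  intros U HU tau Htau HUt.
  destruct (Rlt_dec tau 1) as [H1|H1].
  - rewrite Eq in HUt by auto.
    destruct (glue_cont T Sg HS HM U HU tau 0 ltac:(unfold unit_I in *; lra) ltac:(unfold unit_I; lra) HUt) as [d [Hd Hd']].
    exists d. split; auto. intros s' Hs' Hst.
    destruct (Hd' s' 0 Hs' ltac:(unfold unit_I; lra) Hst ltac:(rewrite Rminus_0_r, Rabs_R0; lra)) as [A B].
    rewrite Eq; auto.
  - assert (tau = 1) by (unfold unit_I in *; lra). subst tau.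
    unfold lin in HUt. destruct (Rlt_dec 1 1); [lra|].
    destruct (HX U HU s t Hs Ht HUt) as [d0 [Hd0 Hd0']].
    destruct (exists_st_close d0 Hd0) as [K HK].
    exists (1 - st K). split. pose proof (st_lt1 K); lra.
    intros s' Hs' Hst. apply Rabs_def2 in Hst. unfold lin.
    destruct (Rlt_dec s' 1) as [Hs1|Hs1]; [|apply Hd0'; auto; rewrite Rminus_diag, Rabs_R0; lra].
    assert (Hk : (K <= idx s')%nat) by (apply idx_ge; lra).
    pose proof (st_le K (idx s') Hk). pose proof (st_le K (S (idx s')) ltac:(lia)).
    pose proof (Cx (idx s')) as C1. pose proof (Cx (S (idx s'))) as C2.
    pose proof (Cy (idx s')) as C3. pose proof (Cy (S (idx s'))) as C4.
    apply Rabs_def2 in C1; apply Rabs_def2 in C2; apply Rabs_def2 in C3; apply Rabs_def2 in C4.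
    pose proof (loc_range s' ltac:(unfold unit_I in *; lra)) as Lr.
    apply Hd0'.
    + pose proof (Hx (idx s')); pose proof (Hx (S (idx s'))); unfold unit_I in *; split; nra.
    + pose proof (Hy (idx s')); pose proof (Hy (S (idx s'))); unfold unit_I in *; split; nra.
    + apply Rabs_def1; nra.
    + apply Rabs_def1; nra.
Qed.

Lemma choose_fun {A B} (P : A -> B -> Prop) : (forall a, exists b, P a b) -> exists f, forall a, P a (f a).
Proof. intros H. exists (fun a => proj1_sig (constructive_indefinite_description _ (H a))).
  intros a. exact (proj2_sig (constructive_indefinite_description _ (H a))). Qed.

Lemma prod_sq {M} (T : Topology M) (op : M -> M -> M) X Y :
  (forall a b, path_continuous T a -> path_continuous T b -> path_continuous T (fun t => op (a t) (b t))) ->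
  square_continuous T X -> square_continuous T Y -> square_continuous T (fun s t => op (X s t) (Y s t)).
Proof.
  intros Hop HX HY U HU s t Hs Ht HUst.
  apply NNPP. intros Hno.
  assert (Hseq : forall n, exists p : R * R, unit_I (fst p) /\ unit_I (snd p) /\
      Rabs (fst p - s) < 1 - st n /\ Rabs (snd p - t) < 1 - st n /\ ~ U (op (X (fst p) (snd p)) (Y (fst p) (snd p)))).
  { intros n. apply NNPP. intros Hn. apply Hno. exists (1 - st n). split. pose proof (st_lt1 n); lra.
    intros s' t' Hs' Ht' A B. apply NNPP. intros C. apply Hn. exists (s', t'). simpl. auto. }
  destruct (choose_fun _ Hseq) as [f Hf].
  set (x := fun n => fst (f n)). set (y := fun n => snd (f n)).
  assert (P1 := path_through T X x y s t HX Hs Ht (fun n => proj1 (Hf n)) (fun n => proj1 (proj2 (Hf n)))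
    (fun n => proj1 (proj2 (proj2 (Hf n)))) (fun n => proj1 (proj2 (proj2 (proj2 (Hf n)))))).
  assert (P2 := path_through T Y x y s t HY Hs Ht (fun n => proj1 (Hf n)) (fun n => proj1 (proj2 (Hf n)))
    (fun n => proj1 (proj2 (proj2 (Hf n)))) (fun n => proj1 (proj2 (proj2 (proj2 (Hf n)))))).
  pose proof (Hop _ _ P1 P2) as P3.
  assert (E1 : forall z, lin z s 1 = s) by (intros; unfold lin; destruct (Rlt_dec 1 1); [lra|auto]).
  assert (E2 : forall z, lin z t 1 = t) by (intros; unfold lin; destruct (Rlt_dec 1 1); [lra|auto]).
  destruct (P3 U HU 1 ltac:(unfold unit_I; lra) ltac:(simpl; rewrite E1, E2; auto)) as [d [Hd Hd']].
  destruct (exists_st_close d Hd) as [K HK].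
  specialize (Hd' (st K) ltac:(pose proof (st_ge0 K); pose proof (st_lt1 K); unfold unit_I; lra)
     ltac:(pose proof (st_lt1 K); apply Rabs_def1; lra)).
  simpl in Hd'. rewrite !lin_st in Hd'. apply (proj2 (proj2 (proj2 (proj2 (Hf K))))). exact Hd'.
Qed.


Lemma path_lip {M} (T : Topology M) p g L : path_continuous T p -> 0 < L ->
  (forall x, unit_I x -> unit_I (g x)) -> (forall x y, unit_I x -> unit_I y -> Rabs (g y - g x) <= L * Rabs (y - x)) ->
  path_continuous T (fun x => p (g x)).
Proof.
  intros Hp HL Hg Lg U HU t Ht HUt. destruct (Hp U HU (g t) (Hg t Ht) HUt) as [d [Hd Hd']].
  exists (d / L). split. apply Rdiv_lt_0_compat; lra. intros s Hs Hst. apply Hd'; auto.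
  eapply Rle_lt_trans. apply Lg; auto. apply (Rmult_lt_compat_l L) in Hst; auto.
  replace (L * (d / L)) with d in Hst by (field; lra). lra.
Qed.

Definition tent (u x : R) : R := u * (1 - Rabs (2 * x - 1)).

Lemma tent_I u x : unit_I u -> unit_I x -> unit_I (tent u x).
Proof. unfold tent, unit_I. intros [] []. assert (0 <= Rabs (2*x-1) <= 1) by (split; [apply Rabs_pos| apply Rabs_le; lra]). split; nra. Qed.

Lemma tent_lip u x y : unit_I u -> Rabs (tent u y - tent u x) <= 2 * Rabs (y - x).
Proof.
  unfold tent, unit_I. intros [].
  replace (u * (1 - Rabs (2 * y - 1)) - u * (1 - Rabs (2 * x - 1))) with (u * (Rabs (2*x-1) - Rabs (2*y-1))) by ring.
  rewrite Rabs_mult. rewrite (Rabs_right u) by lra.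
  assert (Rabs (Rabs (2 * x - 1) - Rabs (2 * y - 1)) <= 2 * Rabs (y - x)).
  { eapply Rle_trans. apply Rabs_triang_inv2. replace (2 * x - 1 - (2 * y - 1)) with (-2 * (y - x)) by ring.
    rewrite Rabs_mult. replace (Rabs (-2)) with 2. lra. rewrite Rabs_left; lra. }
  pose proof (Rabs_pos (Rabs (2 * x - 1) - Rabs (2 * y - 1))). nra.
Qed.

Lemma tent_half u : tent u (1/2) = u.
Proof. unfold tent. replace (2 * (1/2) - 1) with 0 by field. rewrite Rabs_R0. ring. Qed.
Lemma tent_0 u : tent u 0 = 0.
Proof. unfold tent. replace (2 * 0 - 1) with (-(1)) by ring. rewrite Rabs_Ropp, Rabs_R1. ring. Qed.
Lemma tent_1 u : tent u 1 = 0.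
Proof. unfold tent. replace (2 * 1 - 1) with 1 by ring. rewrite Rabs_R1. ring. Qed.

Lemma tent_seq_null {M} (T : Topology M) (e : M) a (n : nat -> nat) (u : nat -> R) :
  null_sequence T e a -> (forall m, (m <= n m)%nat) -> (forall m, unit_I (u m)) ->
  null_sequence T e (fun m x => a (n m) (tent (u m) x)).
Proof.
  intros [Hl Hn] Hnm Hu. split.
  - intros m. destruct (Hl (n m)) as [C [E0 E1]]. split; [|split].
    + apply (path_lip T _ _ 2); auto; try lra. intros; apply tent_I; auto. intros; apply tent_lip; auto.
    + rewrite tent_0; auto.
    + rewrite tent_1; auto.
  - intros N HN. destruct (Hn N HN) as [n0 Hn0]. exists n0. intros m Hm t Ht.
    apply Hn0. specialize (Hnm m). lia. apply tent_I; auto.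
Qed.

Lemma lemmaP {M} (T : Topology M) (op : M -> M -> M) (e : M) a :
  (forall a b, path_continuous T a -> path_continuous T b -> path_continuous T (fun t => op (a t) (b t))) ->
  op e e = e ->
  null_sequence T e a ->
  forall U, is_open T U -> U e -> exists N, forall n n' u v, (N <= n)%nat -> (N <= n')%nat ->
    unit_I u -> unit_I v -> U (op (a n u) (a n' v)).
Proof.
  intros Hop Hee Ha U HU He. apply NNPP. intros Hno.
  assert (Hs : forall N, exists p : (nat * nat) * (R * R), (N <= fst (fst p))%nat /\ (N <= snd (fst p))%nat /\
      unit_I (fst (snd p)) /\ unit_I (snd (snd p)) /\ ~ U (op (a (fst (fst p)) (fst (snd p))) (a (snd (fst p)) (snd (snd p))))).
  { intros N. apply NNPP. intros HN. apply Hno. exists N. intros n n' u v A B C D. apply NNPP. intros E.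
    apply HN. exists ((n, n'), (u, v)). simpl. auto. }
  destruct (choose_fun _ Hs) as [f Hf].
  set (c := fun m x => a (fst (fst (f m))) (tent (fst (snd (f m))) x)).
  set (c' := fun m x => a (snd (fst (f m))) (tent (snd (snd (f m))) x)).
  assert (Nc : null_sequence T e c) by (apply tent_seq_null; auto; intros m; apply (Hf m)).
  assert (Nc' : null_sequence T e c') by (apply tent_seq_null; auto; intros m; apply (Hf m)).
  pose proof (Hop _ _ (inf_concat_cont T e c Nc) (inf_concat_cont T e c' Nc')) as P.
  assert (E1 : forall b : nat -> R -> M, inf_concat e b 1 = e) by (intros; rewrite inf_eq; destruct (Rlt_dec 1 1); [lra|auto]).
  destruct (P U HU 1 ltac:(unfold unit_I; lra) ltac:(simpl; rewrite !E1, Hee; auto)) as [d [Hd Hd']].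
  destruct (exists_st_close d Hd) as [K HK].
  set (tau := st K + / (2 * Kc K)).
  pose proof (Kc_pos K). pose proof (st_S' K). pose proof (st_lt1 (S K)). pose proof (st_ge0 K).
  assert (Ht1 : st K <= tau < st (S K)).
  { unfold tau. assert (0 < / (2 * Kc K)) by (apply Rinv_0_lt_compat; lra).
    assert (/ (2 * Kc K) < st (S K) - st K).
    { replace (st (S K) - st K) with (/ Kc K) by (field_simplify; [|lra]; rewrite <- H0; field; lra).
      apply Rinv_lt_contravar; nra. }
    lra. }
  destruct (in_slot K tau Ht1) as [I1 [I2 _]].
  assert (Hl : loc tau = 1/2) by (rewrite I2; unfold tau; field; lra).
  specialize (Hd' tau ltac:(unfold unit_I; lra) ltac:(apply Rabs_def1; lra)).
  simpl in Hd'. rewrite !inf_eq in Hd'. destruct (Rlt_dec tau 1) as [_|C]; [|lra].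
  rewrite I1, Hl in Hd'. unfold c, c' in Hd'. rewrite !tent_half in Hd'.
  apply (proj2 (proj2 (proj2 (proj2 (Hf K))))). exact Hd'.
Qed.


Definition clamp (x : R) : R := Rmin 1 (Rmax 0 x).

Lemma clamp_I x : unit_I (clamp x).
Proof. unfold clamp, unit_I, Rmin, Rmax. repeat destruct Rle_dec; lra. Qed.
Lemma clamp_0 x : x <= 0 -> clamp x = 0.
Proof. unfold clamp, Rmin, Rmax. repeat destruct Rle_dec; lra. Qed.
Lemma clamp_1 x : 1 <= x -> clamp x = 1.
Proof. unfold clamp, Rmin, Rmax. repeat destruct Rle_dec; lra. Qed.
Lemma clamp_id x : 0 <= x <= 1 -> clamp x = x.
Proof. unfold clamp, Rmin, Rmax. repeat destruct Rle_dec; lra. Qed.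
Lemma clamp_lip x y : Rabs (clamp y - clamp x) <= Rabs (y - x).
Proof. unfold clamp, Rmin, Rmax. repeat destruct Rle_dec; unfold Rabs; repeat destruct Rcase_abs; lra. Qed.

Lemma lip_poly c0 c1 k0 k1 : exists L, 0 < L /\
  lip2 (fun s t => clamp ((t - (c0 + s * c1)) * (k0 + s * k1))) L.
Proof.
  set (A := Rabs k0 + Rabs k1). set (B := 1 + Rabs c0 + Rabs c1).
  exists (1 + A + B * Rabs k1 + Rabs c1 * A). split.
  { unfold A, B. pose proof (Rabs_pos k0); pose proof (Rabs_pos k1); pose proof (Rabs_pos c1); pose proof (Rabs_pos c0). nra. }
  intros s t s' t' Hs Ht Hs' Ht'. eapply Rle_trans. apply clamp_lip.
  replace ((t' - (c0 + s' * c1)) * (k0 + s' * k1) - (t - (c0 + s * c1)) * (k0 + s * k1))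
    with ((t' - t) * (k0 + s' * k1) + (t - (c0 + s * c1)) * ((s' - s) * k1) - ((s' - s) * c1) * (k0 + s' * k1)) by ring.
  unfold unit_I in *.
  assert (HA : Rabs (k0 + s' * k1) <= A).
  { unfold A. eapply Rle_trans. apply Rabs_triang. rewrite Rabs_mult. rewrite (Rabs_right s') by lra.
    pose proof (Rabs_pos k1). nra. }
  assert (HB : Rabs (t - (c0 + s * c1)) <= B).
  { unfold B. eapply Rle_trans. apply Rabs_triang. rewrite Rabs_Ropp. rewrite (Rabs_right t) by lra.
    eapply Rle_trans. apply Rplus_le_compat_l. apply Rabs_triang. rewrite Rabs_mult, (Rabs_right s) by lra.
    pose proof (Rabs_pos c1). nra. }
  pose proof (Rabs_pos (s' - s)). pose proof (Rabs_pos (t' - t)). pose proof (Rabs_pos k1). pose proof (Rabs_pos c1).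
  pose proof (Rabs_pos (k0 + s' * k1)). pose proof (Rabs_pos (t - (c0 + s * c1))).
  eapply Rle_trans. apply Rabs_triang. rewrite Rabs_Ropp.
  eapply Rle_trans. apply Rplus_le_compat_r. apply Rabs_triang.
  rewrite !Rabs_mult.
  assert (Rabs (t' - t) * Rabs (k0 + s' * k1) <= Rabs (t' - t) * A) by nra.
  assert (Rabs (t - (c0 + s * c1)) * (Rabs (s' - s) * Rabs k1) <= B * (Rabs (s' - s) * Rabs k1))
    by (apply Rmult_le_compat_r; [apply Rmult_le_pos|]; lra).
  assert (Rabs (s' - s) * Rabs c1 * Rabs (k0 + s' * k1) <= Rabs (s' - s) * Rabs c1 * A)
    by (apply Rmult_le_compat_l; [apply Rmult_le_pos|]; lra).
  assert (0 <= A) by (unfold A; pose proof (Rabs_pos k0); lra).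
  assert (0 <= B) by (unfold B; pose proof (Rabs_pos c0); lra).
  assert (0 <= A * Rabs (s' - s)) by nra.
  assert (0 <= B * Rabs k1 * Rabs (t' - t)) by (apply Rmult_le_pos; nra).
  assert (0 <= Rabs c1 * A * Rabs (t' - t)) by (apply Rmult_le_pos; nra).
  replace ((1 + A + B * Rabs k1 + Rabs c1 * A) * (Rabs (s' - s) + Rabs (t' - t))) with
    (Rabs (s' - s) + Rabs (t' - t) + A * Rabs (t' - t) + A * Rabs (s' - s) + B * (Rabs (s' - s) * Rabs k1)
     + B * Rabs k1 * Rabs (t' - t) + Rabs (s' - s) * Rabs c1 * A + Rabs c1 * A * Rabs (t' - t)) by ring.
  lra.
Qed.

Lemma mul_nonpos x y : x <= 0 -> 0 <= y -> x * y <= 0.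
Proof. intros; nra. Qed.

Section SW.
Context {M : Type} (T : Topology M) (op : M -> M -> M) (e : M).
Hypothesis opA : forall x, op e x = x.
Hypothesis opB : forall x, op x e = x.

Definition wd j := st (S j) - st j.
Definition uA j s t := clamp ((t - (st j + s * wd j)) * (Kc j + s * (Kc (S j) - Kc j))).
Definition uB j s t := clamp ((t - (st (S j) + s * (- wd j))) * (Kc (S j) + s * (Kc j - Kc (S j)))).
Definition mask (b : nat -> R -> M) j n := if (Nat.eqb n j || Nat.eqb n (S j))%bool then (fun _ : R => e) else b n.
Definition SW b j s t := op (inf_concat e (mask b j) t) (op (b j (uA j s t)) (b (S j) (uB j s t))).

Lemma Kc_mono j : Kc j <= Kc (S j).
Proof. rewrite !Kc_eq, S_INR. pose proof (pos_INR j). nra. Qed.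

Lemma wd_K j : wd j * Kc j = 1.
Proof. apply st_S'. Qed.

Lemma uAB_low j s t : unit_I s -> t <= st j -> uA j s t = 0 /\ uB j s t = 0.
Proof.
  intros Hs Ht. unfold unit_I in Hs. pose proof (Kc_pos j); pose proof (Kc_pos (S j)); pose proof (wd_K j).
  assert (0 <= wd j) by (unfold wd; pose proof (st_lt j (S j)); lia || (pose proof (st_lt j (S j) (Nat.lt_succ_diag_r j)); lra)).
  split; apply clamp_0.
  - assert (0 < Kc j + s * (Kc (S j) - Kc j)) by (pose proof (Kc_mono j); nra).
    assert (t - (st j + s * wd j) <= 0) by nra.
    apply mul_nonpos; lra.
  - assert (0 < Kc (S j) + s * (Kc j - Kc (S j))) by nra.
    assert (t - (st (S j) + s * - wd j) <= 0). { unfold wd in *. nra. }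
    apply mul_nonpos; lra.
Qed.

Lemma uAB_high j s t : unit_I s -> st (S (S j)) <= t -> uA j s t = 1 /\ uB j s t = 1.
Proof.
  intros Hs Ht. unfold unit_I in Hs.
  pose proof (Kc_pos j); pose proof (Kc_pos (S j)); pose proof (wd_K j) as W1; pose proof (wd_K (S j)) as W2.
  pose proof (Kc_mono j) as KM.
  assert (Hst : st (S (S j)) = st j + wd j + wd (S j)) by (unfold wd; ring).
  assert (0 < wd j) by (apply (Rmult_lt_reg_r (Kc j)); lra).
  assert (0 < wd (S j)) by (apply (Rmult_lt_reg_r (Kc (S j))); lra).
  assert (P1 : 1 <= wd j * Kc (S j)) by nra.
  split; apply clamp_1.
  - set (k := Kc j + s * (Kc (S j) - Kc j)). assert (0 < k) by (unfold k; nra).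
    assert (1 <= (st (S (S j)) - (st j + s * wd j)) * k).
    { rewrite Hst. unfold k.
      replace ((st j + wd j + wd (S j) - (st j + s * wd j)) * (Kc j + s * (Kc (S j) - Kc j)))
        with (1 + s * (1 - s) * (wd j * Kc (S j) - 1) + wd (S j) * (1 - s) * Kc j
              + ((1-s)*(1-s) + s * (1-s) + s - 1) * 1 + (1-s)*(1-s)*(wd j * Kc j - 1) + s * (wd (S j) * Kc (S j) - 1)) by ring.
      rewrite W1, W2. assert (0 <= s * (1 - s) * (wd j * Kc (S j) - 1)) by (apply Rmult_le_pos; nra).
      assert (0 <= wd (S j) * (1 - s) * Kc j) by (apply Rmult_le_pos; nra). nra. }
    nra.
  - set (k := Kc (S j) + s * (Kc j - Kc (S j))). assert (0 < k) by (unfold k; nra).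
    assert (1 <= (st (S (S j)) - (st (S j) + s * - wd j)) * k).
    { replace (st (S (S j))) with (st (S j) + wd (S j)) by (unfold wd; ring). unfold k.
      replace ((st (S j) + wd (S j) - (st (S j) + s * - wd j)) * (Kc (S j) + s * (Kc j - Kc (S j))))
        with (1 + s * (1 - s) * (wd j * Kc (S j) - 1) + s * wd (S j) * Kc j
              + (1 - s) * (wd (S j) * Kc (S j) - 1) + s * s * (wd j * Kc j - 1)) by ring.
      rewrite W1, W2. assert (0 <= s * (1 - s) * (wd j * Kc (S j) - 1)) by (apply Rmult_le_pos; nra).
      assert (0 <= s * wd (S j) * Kc j) by (apply Rmult_le_pos; nra). nra. }
    nra.
Qed.

Lemma uA0 j t : uA j 0 t = clamp ((t - st j) * Kc j).
Proof. unfold uA. f_equal. ring. Qed.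
Lemma uB0 j t : uB j 0 t = clamp ((t - st (S j)) * Kc (S j)).
Proof. unfold uB. f_equal. ring. Qed.
Lemma uA1 j t : uA j 1 t = clamp ((t - st (S j)) * Kc (S j)).
Proof. unfold uA, wd. f_equal. ring. Qed.
Lemma uB1 j t : uB j 1 t = clamp ((t - st j) * Kc j).
Proof. unfold uB, wd. f_equal. ring. Qed.

Lemma in_slot_clamp k t : st k <= t < st (S k) -> clamp ((t - st k) * Kc k) = loc t.
Proof. intros H. destruct (in_slot k t H) as [_ [E F]]. rewrite <- E. apply clamp_id. lra. Qed.

Lemma below_clamp k t : t <= st k -> clamp ((t - st k) * Kc k) = 0.
Proof. intros H. apply clamp_0. pose proof (Kc_pos k). nra. Qed.

Lemma above_clamp k t : st (S k) <= t -> clamp ((t - st k) * Kc k) = 1.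
Proof. intros H. apply clamp_1. pose proof (st_S' k). pose proof (Kc_pos k). nra. Qed.

End SW.


Definition swapf (j n : nat) : nat := if Nat.eqb n j then S j else if Nat.eqb n (S j) then j else n.

Lemma swapf_j j : swapf j j = S j.
Proof. unfold swapf. rewrite Nat.eqb_refl. auto. Qed.
Lemma swapf_Sj j : swapf j (S j) = j.
Proof. unfold swapf. destruct (Nat.eqb_spec (S j) j); [lia|]. rewrite Nat.eqb_refl. auto. Qed.
Lemma swapf_ne j n : n <> j -> n <> S j -> swapf j n = n.
Proof. intros. unfold swapf. destruct (Nat.eqb_spec n j); [lia|]. destruct (Nat.eqb_spec n (S j)); [lia|]. auto. Qed.
Lemma swapf_inv j n : swapf j (swapf j n) = n.
Proof. unfold swapf. destruct (Nat.eqb_spec n j); subst.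
  - destruct (Nat.eqb_spec (S j) j); [lia|]. rewrite Nat.eqb_refl. auto.
  - destruct (Nat.eqb_spec n (S j)); subst. rewrite Nat.eqb_refl. auto.
    destruct (Nat.eqb_spec n j); [lia|]. destruct (Nat.eqb_spec n (S j)); [lia|]. auto. Qed.

Lemma const_loop {M} (T : Topology M) (e : M) : is_loop T e (fun _ => e).
Proof. split; auto. intros U HU t Ht HUe. exists 1. split. lra. intros; auto. Qed.

Lemma inf0 {M} (e : M) c : (forall n, c n 0 = e) -> inf_concat e c 0 = e.
Proof. intros H. rewrite inf_eq. destruct (Rlt_dec 0 1); [|lra].
  pose proof (st_lt 0 1 ltac:(lia)). rewrite st_0 in H0.
  destruct (in_slot 0 0 ltac:(rewrite st_0; lra)) as [E1 [E2 _]]. rewrite E1, E2, st_0.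
  replace ((0 - 0) * Kc 0) with 0 by ring. auto. Qed.

Lemma inf1 {M} (e : M) c : inf_concat e c 1 = e.
Proof. rewrite inf_eq. destruct (Rlt_dec 1 1); [lra|auto]. Qed.

Section SW2.
Context {M : Type} (T : Topology M) (op : M -> M -> M) (e : M).
Hypothesis opA : forall x, op e x = x.
Hypothesis opB : forall x, op x e = x.
Hypothesis Hop : forall a b, path_continuous T a -> path_continuous T b -> path_continuous T (fun t => op (a t) (b t)).
Variable b : nat -> R -> M.
Hypothesis Hb : null_sequence T e b.

Let L n := proj1 Hb n.
Let b0 n : b n 0 = e := proj1 (proj2 (L n)).
Let b1 n : b n 1 = e := proj2 (proj2 (L n)).

Lemma mask_j j : mask e b j j = fun _ => e.
Proof. unfold mask. rewrite Nat.eqb_refl. auto. Qed.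
Lemma mask_Sj j : mask e b j (S j) = fun _ => e.
Proof. unfold mask. rewrite Nat.eqb_refl, Bool.orb_true_r. auto. Qed.
Lemma mask_ne j n : n <> j -> n <> S j -> mask e b j n = b n.
Proof. intros. unfold mask. destruct (Nat.eqb_spec n j); [lia|]. destruct (Nat.eqb_spec n (S j)); [lia|]. auto. Qed.

Lemma mask_null j : null_sequence T e (mask e b j).
Proof.
  apply (null_mod T e b); auto.
  - intros n. unfold mask. destruct (_ || _)%bool. apply const_loop. apply L.
  - intros n t _. unfold mask. destruct (_ || _)%bool; auto.
Qed.

Lemma SW_cont j : square_continuous T (SW op e b j).
Proof.
  unfold SW. apply (prod_sq T op (fun s t => inf_concat e (mask e b j) t)); auto.
  - apply sq_of_path2. apply inf_concat_cont. apply mask_null.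
  - apply (prod_sq T op); auto.
    + destruct (lip_poly (st j) (wd j) (Kc j) (Kc (S j) - Kc j)) as [Lc [HL Hlip]].
      apply (sq_path_lip T (b j) _ Lc); auto. apply L. intros s t _ _. apply clamp_I.
    + destruct (lip_poly (st (S j)) (- wd j) (Kc (S j)) (Kc j - Kc (S j))) as [Lc [HL Hlip]].
      apply (sq_path_lip T (b (S j)) _ Lc); auto. apply L. intros s t _ _. apply clamp_I.
Qed.

Lemma slot_cases j t : 0 <= t < 1 ->
  ((idx t < j)%nat /\ t <= st j) \/ idx t = j \/ idx t = S j \/ ((S (S j) <= idx t)%nat /\ st (S (S j)) <= t).
Proof.
  intros H. destruct (idx_spec t H) as [A B].
  destruct (lt_eq_lt_dec (idx t) j) as [[C|C]|C]; auto.
  - left. split; auto. pose proof (st_le (S (idx t)) j C). lra.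
  - destruct (Nat.eq_dec (idx t) (S j)); auto. right; right; right. split. lia.
    pose proof (st_le (S (S j)) (idx t) ltac:(lia)). lra.
Qed.

Lemma SW_0 j t : unit_I t -> SW op e b j 0 t = inf_concat e b t.
Proof.
  intros Ht. unfold SW. rewrite !inf_eq. pose proof (st_lt1 (S (S j))).
  destruct (Rlt_dec t 1) as [H1|H1].
  - assert (Hsl := idx_spec t ltac:(unfold unit_I in *; lra)).
    destruct (slot_cases j t ltac:(unfold unit_I in *; lra)) as [[C D]|[C|[C|[C D]]]].
    + destruct (uAB_low j 0 t ltac:(unfold unit_I; lra) D) as [E F]. rewrite E, F, b0, b0, opA, opB.
      rewrite mask_ne; auto; lia.
    + rewrite C, mask_j, uA0, uB0, opA. rewrite C in Hsl.
      rewrite in_slot_clamp by lra. rewrite below_clamp by lra. rewrite b0, opB. auto.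
    + rewrite C, mask_Sj, uA0, uB0, opA. rewrite C in Hsl.
      rewrite above_clamp by lra. rewrite in_slot_clamp by lra. rewrite b1, opA. auto.
    + destruct (uAB_high j 0 t ltac:(unfold unit_I; lra) D) as [E F]. rewrite E, F, b1, b1, opA, opB.
      rewrite mask_ne; auto; lia.
  - destruct (uAB_high j 0 t ltac:(unfold unit_I; lra) ltac:(unfold unit_I in *; lra)) as [E F].
    rewrite E, F, b1, b1, opA, opB. auto.
Qed.

Lemma SW_1 j t : unit_I t -> SW op e b j 1 t = inf_concat e (fun n => b (swapf j n)) t.
Proof.
  intros Ht. unfold SW. rewrite !inf_eq. pose proof (st_lt1 (S (S j))).
  destruct (Rlt_dec t 1) as [H1|H1].
  - assert (Hsl := idx_spec t ltac:(unfold unit_I in *; lra)).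
    destruct (slot_cases j t ltac:(unfold unit_I in *; lra)) as [[C D]|[C|[C|[C D]]]].
    + destruct (uAB_low j 1 t ltac:(unfold unit_I; lra) D) as [E F]. rewrite E, F, b0, b0, opA, opB.
      rewrite mask_ne, swapf_ne; auto; lia.
    + rewrite C, mask_j, uA1, uB1, opA, swapf_j. rewrite C in Hsl.
      rewrite below_clamp by lra. rewrite in_slot_clamp by lra. rewrite b0, opA. auto.
    + rewrite C, mask_Sj, uA1, uB1, opA, swapf_Sj. rewrite C in Hsl.
      rewrite in_slot_clamp by lra. rewrite above_clamp by lra. rewrite b1, opB. auto.
    + destruct (uAB_high j 1 t ltac:(unfold unit_I; lra) D) as [E F]. rewrite E, F, b1, b1, opA, opB.
      rewrite mask_ne, swapf_ne; auto; lia.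
  - destruct (uAB_high j 1 t ltac:(unfold unit_I; lra) ltac:(unfold unit_I in *; lra)) as [E F].
    rewrite E, F, b1, b1, opA, opB. auto.
Qed.

Lemma SW_ends j s : unit_I s -> SW op e b j s 0 = e /\ SW op e b j s 1 = e.
Proof.
  intros Hs. unfold SW. pose proof (st_ge0 j). pose proof (st_lt1 (S (S j))). split.
  - destruct (uAB_low j s 0 Hs ltac:(lra)) as [E F]. rewrite E, F, b0, b0, opA, inf0; auto.
    intros n. unfold mask. destruct (_ || _)%bool; auto.
  - destruct (uAB_high j s 1 Hs ltac:(lra)) as [E F]. rewrite E, F, b1, b1, opA, inf1; auto.
Qed.

Definition Vb j t (x : M) : Prop := x = e \/ exists i u, unit_I u /\ x = b i u /\ (i = j \/ i = S j \/ (t < 1 /\ i = idx t)).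

Lemma SW_shape j s t : unit_I s -> unit_I t -> exists x y, SW op e b j s t = op x y /\ Vb j t x /\ Vb j t y.
Proof.
  intros Hs Ht. unfold SW. rewrite inf_eq. pose proof (st_lt1 (S (S j))).
  destruct (Rlt_dec t 1) as [H1|H1].
  - destruct (slot_cases j t ltac:(unfold unit_I in *; lra)) as [[C D]|[C|[C|[C D]]]].
    + destruct (uAB_low j s t Hs D) as [E F]. rewrite E, F, b0, b0, opA.
      rewrite mask_ne by lia. exists (b (idx t) (loc t)), e. split; auto. split; [|left; auto].
      right. exists (idx t), (loc t). split. pose proof (loc_range t); unfold unit_I in *; lra. auto.
    + rewrite C, mask_j, opA. exists (b j (uA j s t)), (b (S j) (uB j s t)). split; auto.
      split; right.
      * exists j, (uA j s t). split. apply clamp_I. auto.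
      * exists (S j), (uB j s t). split. apply clamp_I. auto.
    + rewrite C, mask_Sj, opA. exists (b j (uA j s t)), (b (S j) (uB j s t)). split; auto.
      split; right.
      * exists j, (uA j s t). split. apply clamp_I. auto.
      * exists (S j), (uB j s t). split. apply clamp_I. auto.
    + destruct (uAB_high j s t Hs D) as [E F]. rewrite E, F, b1, b1, opA.
      rewrite mask_ne by lia. exists (b (idx t) (loc t)), e. split; auto. split; [|left; auto].
      right. exists (idx t), (loc t). split. pose proof (loc_range t); unfold unit_I in *; lra. auto.
  - destruct (uAB_high j s t Hs ltac:(unfold unit_I in *; lra)) as [E F]. rewrite E, F, b1, b1, opA.
    exists e, e. split; auto. split; left; auto.
Qed.

Lemma SW_low j s t : unit_I s -> unit_I t -> t < st j -> SW op e b j s t = inf_concat e b t.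
Proof.
  intros Hs Ht C. unfold SW. pose proof (st_lt1 j).
  destruct (uAB_low j s t Hs ltac:(lra)) as [E F]. rewrite E, F, b0, b0, opB.
  rewrite !inf_eq. destruct (Rlt_dec t 1); [|lra].
  assert (idx t < j)%nat by (apply idx_lt; unfold unit_I in *; lra).
  rewrite mask_ne; auto; lia.
Qed.

End SW2.


Record State := mkSt { sk : nat; sps : nat -> nat; spi : nat -> nat }.

Section Machine.
Variable phi : nat -> nat.
Hypothesis phi_inj : forall m n, phi m = phi n -> m = n.

Definition mpos (x : State) : nat := spi x (phi (sk x)).

Definition step (x : State) : State :=
  if Nat.ltb (sk x) (mpos x) then
    mkSt (sk x) (fun n => sps x (swapf (mpos x - 1) n)) (fun n => swapf (mpos x - 1) (spi x n))
  else mkSt (S (sk x)) (sps x) (spi x).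

Fixpoint stt (m : nat) : State :=
  match m with O => mkSt 0 (fun n => n) (fun n => n) | S m' => step (stt m') end.

Definition Inv (x : State) : Prop :=
  (forall n, sps x (spi x n) = n) /\ (forall n, spi x (sps x n) = n) /\
  (forall j, (j < sk x)%nat -> sps x j = phi j).

Lemma inv_p x : Inv x -> (sk x <= mpos x)%nat.
Proof.
  intros [H1 [H2 H3]]. unfold mpos. destruct (le_lt_dec (sk x) (spi x (phi (sk x)))); auto.
  pose proof (H3 _ l). rewrite H1 in H. apply phi_inj in H. lia.
Qed.

Lemma inv_step x : Inv x -> Inv (step x).
Proof.
  intros HI. pose proof (inv_p x HI) as Hp. destruct HI as [H1 [H2 H3]]. unfold step.
  destruct (Nat.ltb_spec (sk x) (mpos x)) as [C|C].
  - split; [|split]; simpl.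
    + intros n. rewrite swapf_inv. auto.
    + intros n. rewrite H2. apply swapf_inv.
    + intros j Hj. rewrite swapf_ne by lia. auto.
  - assert (E : mpos x = sk x) by lia.
    split; [|split]; simpl; auto.
    intros j Hj. destruct (Nat.eq_dec j (sk x)) as [->|D]; [|apply H3; lia].
    unfold mpos in E. rewrite <- E at 1. apply H1.
Qed.

Lemma inv_stt m : Inv (stt m).
Proof.
  induction m. - split; [|split]; simpl; auto. intros; lia. - simpl. apply inv_step; auto.
Qed.

Lemma sk_step x : (sk x <= sk (step x))%nat.
Proof. unfold step. destruct (Nat.ltb _ _); simpl; lia. Qed.

Lemma sk_mono m m' : (m <= m')%nat -> (sk (stt m) <= sk (stt m'))%nat.
Proof. induction 1; auto. simpl. pose proof (sk_step (stt m0)). lia. Qed.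

Lemma stt_add d m : stt (d + m) = Nat.iter d step (stt m).
Proof. induction d; simpl; auto. rewrite IHd. auto. Qed.

Lemma progress_d x d : Inv x -> (mpos x - sk x = d)%nat -> sk (Nat.iter (S d) step x) = S (sk x).
Proof.
  revert x. induction d; intros x HI Hd.
  - simpl. pose proof (inv_p x HI). unfold step.
    destruct (Nat.ltb_spec (sk x) (mpos x)); simpl; lia.
  - pose proof (inv_p x HI).
    assert (Hlt : (sk x < mpos x)%nat) by lia.
    replace (Nat.iter (S (S d)) step x) with (Nat.iter (S d) step (step x)).
    2:{ clear. induction (S d); simpl; auto. rewrite IHn. auto. }
    assert (Hs : step x = mkSt (sk x) (fun n => sps x (swapf (mpos x - 1) n)) (fun n => swapf (mpos x - 1) (spi x n))).
    { unfold step. destruct (Nat.ltb_spec (sk x) (mpos x)); [auto|lia]. }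
    rewrite (IHd (step x)); [rewrite Hs; auto | apply inv_step; auto |].
    rewrite Hs. unfold mpos. simpl. fold (mpos x).
    replace (mpos x) with (S (mpos x - 1)) at 2 by lia. rewrite swapf_Sj. lia.
Qed.

Lemma sk_unbounded K : exists M, (K <= sk (stt M))%nat.
Proof.
  induction K. exists 0%nat. lia.
  destruct IHK as [M HM]. destruct (Nat.eq_dec (sk (stt M)) K) as [E|E].
  - set (d := (mpos (stt M) - sk (stt M))%nat).
    exists (S d + M)%nat. rewrite stt_add. rewrite (progress_d (stt M) d (inv_stt M) eq_refl). lia.
  - exists M. lia.
Qed.

End Machine.


Section Stages.
Context {M : Type} (T : Topology M) (op : M -> M -> M) (e : M).
Hypothesis opA : forall x, op e x = x.
Hypothesis opB : forall x, op x e = x.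
Hypothesis Hop : forall a b, path_continuous T a -> path_continuous T b -> path_continuous T (fun t => op (a t) (b t)).
Variable a : nat -> R -> M.
Hypothesis Ha : null_sequence T e a.
Variable phi : nat -> nat.
Hypothesis phi_inj : forall m n, phi m = phi n -> m = n.

Definition bm m := fun n => a (sps (stt phi m) n).

Definition Stage m s t :=
  let x := stt phi m in
  if Nat.ltb (sk x) (mpos phi x) then SW op e (bm m) (mpos phi x - 1) s t else inf_concat e (bm m) t.

Lemma bm_null m : null_sequence T e (bm m).
Proof.
  destruct (inv_stt phi phi_inj m) as [H1 [H2 _]].
  unfold bm. apply null_reindex; auto.
  - intros x y E. rewrite <- (H2 x), <- (H2 y), E. auto.
  - intros i. exists (spi (stt phi m) i). auto.
Qed.

Lemma Stage_cont m : square_continuous T (Stage m).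
Proof.
  unfold Stage. destruct (Nat.ltb _ _).
  - apply (SW_cont T op e); auto. apply bm_null.
  - apply sq_of_path2. apply inf_concat_cont. apply bm_null.
Qed.

Lemma Stage_0 m t : unit_I t -> Stage m 0 t = inf_concat e (bm m) t.
Proof. intros Ht. unfold Stage. destruct (Nat.ltb _ _); auto. apply (SW_0 T op e); auto. apply bm_null. Qed.

Lemma Stage_1 m t : unit_I t -> Stage m 1 t = inf_concat e (bm (S m)) t.
Proof.
  intros Ht. unfold Stage. destruct (Nat.ltb_spec (sk (stt phi m)) (mpos phi (stt phi m))) as [C|C].
  - rewrite (SW_1 T op e); auto. 2: apply bm_null.
    unfold bm. simpl. unfold step. rewrite (proj2 (Nat.ltb_lt _ _) C). reflexivity.
  - unfold bm. simpl. unfold step. rewrite (proj2 (Nat.ltb_ge _ _) C). reflexivity.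
Qed.

Lemma Stage_match m t : unit_I t -> Stage m 1 t = Stage (S m) 0 t.
Proof. intros. rewrite Stage_1, Stage_0; auto. Qed.

Lemma Stage_ends m s : unit_I s -> Stage m s 0 = e /\ Stage m s 1 = e.
Proof.
  intros Hs. unfold Stage. destruct (Nat.ltb _ _).
  - apply (SW_ends T op e); auto. apply bm_null.
  - split. apply inf0. intros n. apply (proj1 (bm_null m)). apply inf1.
Qed.

Lemma Stage_low m s t : unit_I s -> unit_I t -> t < st (sk (stt phi m)) -> Stage m s t = inf_concat e (bm m) t.
Proof.
  intros Hs Ht C. unfold Stage. destruct (Nat.ltb_spec (sk (stt phi m)) (mpos phi (stt phi m))); auto.
  apply (SW_low T op e); auto. apply bm_null. pose proof (st_le (sk (stt phi m)) (mpos phi (stt phi m) - 1) ltac:(lia)). lra.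
Qed.

Definition W m t (z : M) : Prop := z = e \/ exists i u, unit_I u /\ z = a (sps (stt phi m) i) u /\
   (forall K, (K <= sk (stt phi m))%nat -> st K <= t -> (K <= i)%nat).

Lemma Stage_shape m s t : unit_I s -> unit_I t -> exists x y, Stage m s t = op x y /\ W m t x /\ W m t y.
Proof.
  intros Hs Ht. unfold Stage. destruct (Nat.ltb_spec (sk (stt phi m)) (mpos phi (stt phi m))) as [C|C].
  - destruct (SW_shape T op e opA (bm m) (bm_null m) (mpos phi (stt phi m) - 1) s t Hs Ht) as [x [y [E [Vx Vy]]]].
    exists x, y. split; auto.
    assert (Hc : forall z, Vb e (bm m) (mpos phi (stt phi m) - 1) t z -> W m t z).
    { intros z [Hz|[i [u [Hu [Hz Hi]]]]]; [left; auto|right]. exists i, u. split; auto. split; auto.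
      intros K HK HKt. destruct Hi as [Hi|[Hi|[Ht1 Hi]]]; subst i; try lia. apply idx_ge; auto. }
    auto.
  - rewrite inf_eq. destruct (Rlt_dec t 1) as [H1|H1].
    + exists (bm m (idx t) (loc t)), e. split; auto. split; [|left; auto]. right.
      exists (idx t), (loc t). split. pose proof (loc_range t); unfold unit_I in *; lra. split; auto.
      intros K _ HK. apply idx_ge; auto.
    + exists e, e. split; auto. split; left; auto.
Qed.

End Stages.


Lemma img_a {M} (T : Topology M) (e : M) a n u : null_sequence T e a -> unit_I u ->
  path_image (inf_concat e a) (a n u).
Proof.
  intros Ha Hu. destruct (Req_dec u 1) as [E|E].
  - exists 1. split. unfold unit_I; lra. rewrite inf1, E. symmetry. apply (proj1 Ha n).
  - unfold unit_I in Hu. pose proof (Kc_pos n). pose proof (st_S' n). pose proof (st_ge0 n). pose proof (st_lt1 (S n)).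
    set (t := st n + u / Kc n).
    assert (Ht : st n <= t < st (S n)).
    { unfold t. assert (0 <= u / Kc n) by (apply Rmult_le_pos; [lra| left; apply Rinv_0_lt_compat; lra]).
      assert (u / Kc n < st (S n) - st n).
      { replace (st (S n) - st n) with (1 / Kc n) by (field_simplify; [|lra]; rewrite <- H0; field; lra).
        unfold Rdiv. apply Rmult_lt_compat_r. apply Rinv_0_lt_compat; lra. lra. }
      lra. }
    destruct (in_slot n t Ht) as [E1 [E2 _]].
    exists t. split. unfold unit_I; lra. rewrite inf_eq. destruct (Rlt_dec t 1); [|lra].
    rewrite E1, E2. f_equal. unfold t. field. lra.
Qed.

Lemma img_e {M} (e : M) a : path_image (inf_concat e a) e.
Proof. exists 1. split. unfold unit_I; lra. apply inf1. Qed.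

Lemma covers (phi : nat -> nat) : (forall m, exists n, phi n = m) ->
  forall N, exists K, forall i, (i < N)%nat -> exists j, (j < K)%nat /\ phi j = i.
Proof.
  intros Hs N. induction N as [|N [K IH]].
  - exists 0%nat. intros; lia.
  - destruct (Hs N) as [jN HjN]. exists (Nat.max K (S jN)). intros i Hi.
    destruct (Nat.eq_dec i N) as [->|D].
    + exists jN. split; auto. lia.
    + destruct (IH i ltac:(lia)) as [j [Hj1 Hj2]]. exists j. split; auto. lia.
Qed.

Theorem mainTheorem10 (M : Type) (T : Topology M) (op : M -> M -> M) (e : M)
  (hM : pre_Delta_monoid T op e) (hpc : path_connected T)
  (a : nat -> R -> M) (ha : null_sequence T e a)
  (phi : nat -> nat) (hphi : bijective_nat phi) :
  exists H : R -> R -> M,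
    square_continuous T H /\
    (forall t, unit_I t -> H 0 t = inf_concat e a t) /\
    (forall t, unit_I t -> H 1 t = inf_concat e (fun n => a (phi n)) t) /\
    (forall s, unit_I s -> H s 0 = e /\ H s 1 = e) /\
    (forall s t, unit_I s -> unit_I t ->
       set_prod op (path_image (inf_concat e a)) (path_image (inf_concat e a)) (H s t)).
Proof.
  destruct hM as [_ [opA [opB Hop]]]. destruct hphi as [Hinj Hsur].
  set (gam := inf_concat e (fun n => a (phi n))).
  assert (Hgn : null_sequence T e (fun n => a (phi n))) by (apply null_reindex; auto).
  assert (Hgc := inf_concat_cont T e _ Hgn).
  set (St := Stage op e a phi).
  assert (HSc := Stage_cont T op e Hop a ha phi Hinj).
  assert (HSm := Stage_match T op e opA opB a ha phi Hinj).
  assert (Hloop : forall n, a n 0 = e /\ a n 1 = e) by (intros n; destruct (proj1 ha n) as [_ [? ?]]; auto).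
  exists (fun s t => if Rlt_dec s 1 then St (idx s) (loc s) t else gam t).
  split; [|split; [|split; [|split]]].
  -
    intros U HU s t Hs Ht HUst.
    destruct (Rlt_dec s 1) as [s1|s1].
    + destruct (glue_cont T St HSc HSm U HU s t ltac:(unfold unit_I in *; lra) Ht HUst) as [d [Hd Hd']].
      exists d. split; auto. intros s' t' Hs' Ht' A B. destruct (Hd' s' t' Hs' Ht' A B) as [C D].
      destruct (Rlt_dec s' 1); [auto|lra].
    + assert (s = 1) by (unfold unit_I in *; lra). subst s.
      destruct (Rlt_dec t 1) as [t1|t1].
      * set (k0 := idx t). destruct (sk_unbounded phi Hinj (S (S k0))) as [M0 HM0].
        destruct (Hgc U HU t Ht HUst) as [d0 [Hd0 Hd0']].
        destruct (idx_spec t ltac:(unfold unit_I in *; lra)) as [I1 I2]. fold k0 in I1, I2.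
        pose proof (st_lt (S k0) (S (S k0)) ltac:(lia)). pose proof (st_lt1 M0).
        destruct (min4 d0 (1 - st M0) (st (S (S k0)) - t) 1) as [d [D0 [D1 [D2 [D3 D4]]]]]; try lra.
        exists d. split; auto. intros s' t' Hs' Ht' A B.
        pose proof (Rabs_def2 _ _ A) as A'. pose proof (Rabs_def2 _ _ B) as B'.
        assert (Eq : (if Rlt_dec s' 1 then St (idx s') (loc s') t' else gam t') = gam t').
        { destruct (Rlt_dec s' 1) as [s'1|]; auto.
          assert (HMi : (M0 <= idx s')%nat) by (apply idx_ge; lra).
          pose proof (sk_mono phi M0 (idx s') HMi) as Hsk.
          pose proof (st_le (S (S k0)) (sk (stt phi (idx s'))) ltac:(lia)).
          unfold St. rewrite (Stage_low T op e opB a ha phi Hinj (idx s') (loc s') t');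
            [| pose proof (loc_range s'); unfold unit_I in *; lra | exact Ht' | lra].
          unfold gam. rewrite !inf_eq. pose proof (st_lt1 (S (S k0))).
          destruct (Rlt_dec t' 1); [|lra].
          unfold bm. destruct (inv_stt phi Hinj (idx s')) as [_ [_ H3]].
          rewrite H3; auto.
          assert (idx t' < S (S k0))%nat by (apply idx_lt; unfold unit_I in *; lra). lia. }
        rewrite Eq. apply Hd0'; auto. apply Rabs_def1; lra.
      * assert (t = 1) by (unfold unit_I in *; lra). subst t.
        unfold gam in HUst. rewrite inf1 in HUst.
        destruct (lemmaP T op e a Hop (opA e) ha U HU HUst) as [N HN].
        destruct (covers phi Hsur N) as [K HK].
        destruct (sk_unbounded phi Hinj K) as [M0 HM0].
        pose proof (st_lt1 M0). pose proof (st_lt1 K).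
        destruct (min2 (1 - st M0) (1 - st K)) as [d [D0 [D1 D2]]]; try lra.
        set (good := fun z => exists n u, (N <= n)%nat /\ unit_I u /\ z = a n u).
        assert (ge : good e). { exists N, 0. split; auto. split. unfold unit_I; lra. symmetry; apply Hloop. }
        assert (gU : forall x y, good x -> good y -> U (op x y)).
        { intros x y [n [u [? [? ->]]]] [n' [u' [? [? ->]]]]. apply HN; auto. }
        assert (bigphi : forall j, (K <= j)%nat -> (N <= phi j)%nat).
        { intros j Hj. destruct (le_lt_dec N (phi j)); auto. destruct (HK _ l) as [j' [Hj' E]].
          apply Hinj in E. lia. }
        exists d. split; auto. intros s' t' Hs' Ht' A B.
        pose proof (Rabs_def2 _ _ A) as A'. pose proof (Rabs_def2 _ _ B) as B'.
        destruct (Rlt_dec s' 1) as [s'1|s'1].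
        -- set (m := idx s').
           assert (HMi : (M0 <= m)%nat) by (apply idx_ge; lra).
           pose proof (sk_mono phi M0 m HMi) as Hsk.
           destruct (Stage_shape T op e opA opB a ha phi Hinj m (loc s') t'
             ltac:(pose proof (loc_range s'); unfold unit_I in *; lra) Ht') as [x [y [E [Wx Wy]]]].
           unfold St. rewrite E.
           assert (Wg : forall z, W e a phi m t' z -> good z).
           { intros z [Hz|[i [u [Hu [Hz Hi]]]]]; [rewrite Hz; auto|].
             exists (sps (stt phi m) i), u. split; auto.
             assert (Ki : (K <= i)%nat) by (apply Hi; lia || lra).
             destruct (le_lt_dec N (sps (stt phi m) i)); auto.
             destruct (HK _ l) as [j [Hj Ej]].
             destruct (inv_stt phi Hinj m) as [_ [H2 H3]].
             rewrite <- H3 in Ej by lia. apply (f_equal (spi (stt phi m))) in Ej. rewrite !H2 in Ej. lia. }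
           apply gU; auto.
        -- unfold gam. rewrite inf_eq. destruct (Rlt_dec t' 1) as [t'1|t'1].
           ++ rewrite <- (opB (a (phi (idx t')) (loc t'))). apply gU; auto.
              exists (phi (idx t')), (loc t'). split. apply bigphi. apply idx_ge; lra.
              split; auto. pose proof (loc_range t'); unfold unit_I in *; lra.
           ++ rewrite <- (opA e). apply gU; auto.
  -
    intros t Ht. destruct (Rlt_dec 0 1) as [_|C]; [|lra].
    pose proof (st_lt 0 1 ltac:(lia)). rewrite st_0 in H.
    destruct (in_slot 0 0 ltac:(rewrite st_0; lra)) as [E1 [E2 _]]. rewrite E1, E2, st_0.
    replace ((0 - 0) * Kc 0) with 0 by ring. unfold St. rewrite (Stage_0 T op e opA opB a ha phi Hinj); auto.
  - intros t Ht. destruct (Rlt_dec 1 1); [lra|reflexivity].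
  - intros s Hs. destruct (Rlt_dec s 1) as [s1|s1].
    + apply (Stage_ends T op e opA a ha phi Hinj). pose proof (loc_range s); unfold unit_I in *; lra.
    + unfold gam. split. apply inf0. intros; apply Hloop. apply inf1.
  - intros s t Hs Ht. destruct (Rlt_dec s 1) as [s1|s1].
    + destruct (Stage_shape T op e opA opB a ha phi Hinj (idx s) (loc s) t
         ltac:(pose proof (loc_range s); unfold unit_I in *; lra) Ht) as [x [y [E [Wx Wy]]]].
      assert (Wi : forall z, W e a phi (idx s) t z -> path_image (inf_concat e a) z).
      { intros z [Hz|[i [u [Hu [Hz _]]]]]. rewrite Hz; apply img_e. rewrite Hz. apply (img_a T); auto. }
      exists x, y. auto.
    + exists (gam t), e. split; [|split; [apply img_e | symmetry; apply opB]].
      unfold gam. rewrite inf_eq. destruct (Rlt_dec t 1). apply (img_a T); auto.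
      pose proof (loc_range t); unfold unit_I in *; lra. apply img_e.
Qed.
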